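(* Let $T$ be a complete first-order theory with monster model $\mathcal{U}$, let $A\subseteq\mathcal{U}$ be small, and let $p\in S_x(\mathcal{U})$, $q\in S_y(\mathcal{U})$ be global types. If $p\geq_{D,A} q$, then $\delta_p\geq_{\mathbb{E},A}\delta_q$.
   Context: ''Small'' means of cardinality less than the saturation of $\mathcal{U}$; $x,y$ are disjoint finite tuples of variables. For $B\subseteq\mathcal{U}$, $\mathcal{L}_x(B)$ is the Boolean algebra of formulas in free variables $x$ with parameters from $B$ modulo $T$-equivalence (identified with $B$-definable subsets of $\mathcal{U}^x$), and $\mathcal{L}_x(B)$ is identified with a subalgebra of $\mathcal{L}_{xy}(B)$ via $\varphi(x)\mapsto\varphi(x)\wedge y=y$. A Keisler measure over $B$ in $x$ is a finitely additive probability measure on $\mathcal{L}_x(B)$; $\mathfrak{M}_x(B)$ is the set of these. For $\omega\in\mathfrak{M}_{xy}(B)$, $\pi_x(\omega)\in\mathfrak{M}_x(B)$ is $\pi_x(\omega)(\varphi(x))=\omega(\varphi(x)\wedge y=y)$ (similarly $\pi_y$), and $\omega|_{C}$ denotes restriction to $\mathcal{L}_{xy}(C)$ for $C\subseteq B$. For $p\in S_x(B)$, $\delta_p$ is the Dirac measure: $\delta_p(\varphi)=1$ if $\varphi\in p$ and $0$ otherwise. Domination of types: $p\geq_{D,A}q$ means there is $r\in S_{xy}(A)$ with $p|_A\subseteq r$ and $p\cup r\vdash q$. Extension space: for $\mu\in\mathfrak{M}_x(\mathcal{U})$ and $\lambda\in\mathfrak{M}_{xy}(A)$ with $\mu|_A=\pi_x(\lambda)$,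 $\operatorname{E}(\lambda,\mu)=\{\omega\in\mathfrak{M}_{xy}(\mathcal{U}):\omega|_A=\lambda,\ \pi_x(\omega)=\mu\}$. Extension domination: for $\mu\in\mathfrak{M}_x(\mathcal{U})$, $\nu\in\mathfrak{M}_y(\mathcal{U})$, $\mu\geq_{\mathbb{E},A}\nu$ means there is $\lambda\in\mathfrak{M}_{xy}(A)$ with $\pi_x(\lambda)=\mu|_A$ such that $\pi_y(\omega)=\nu$ for every $\omega\in\operatorname{E}(\lambda,\mu)$. *)

(* Defs.v *)
From HB Require Import structures.
From mathcomp Require Import all_boot all_order all_algebra.
From mathcomp Require Import boolp classical_sets cardinality reals.
Set Implicit Arguments. Unset Strict Implicit. Unset Printing Implicit Defensive.
Import Order.TTheory GRing.Theory Num.Theory.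
Local Open Scope classical_set_scope.
Local Open Scope ring_scope.

Record signature := Signature {
  Fun : Type; fun_ar : Fun -> nat;
  Rel : Type; rel_ar : Rel -> nat }.

Inductive term (L : signature) : Type :=
| tvar : nat -> term L
| tapp (f : Fun L) : ('I_(fun_ar f) -> term L) -> term L.

Inductive formula (L : signature) : Type :=
| fEq : term L -> term L -> formula L
| fRel (r : Rel L) : ('I_(rel_ar r) -> term L) -> formula L
| fNot : formula L -> formula L
| fAnd : formula L -> formula L -> formula L
| fEx : nat -> formula L -> formula L.

Record structure (L : signature) := Structure {
  carrier :> Type;
  ifun : forall f : Fun L, ('I_(fun_ar f) -> carrier) -> carrier;
  irel : forall r : Rel L, ('I_(rel_ar r) -> carrier) -> Prop }.

Section Semantics.
Variables (L : signature) (M : structure L).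

Fixpoint teval (e : nat -> M) (t : term L) : M :=
  match t with
  | tvar i => e i
  | tapp f ts => @ifun L M f (fun j => teval e (ts j))
  end.

Fixpoint sat (e : nat -> M) (phi : formula L) : Prop :=
  match phi with
  | fEq t u => teval e t = teval e u
  | fRel r ts => @irel L M r (fun j => teval e (ts j))
  | fNot psi => ~ sat e psi
  | fAnd psi chi => sat e psi /\ sat e chi
  | fEx i psi => exists a : M, sat (fun k => if k == i then a else e k) psi
  end.

(* M |= phi(c_0,...,c_{k-1}) where the tuple c is plugged in for the
   variables 0..k-1 (any other free variables are read universally). *)
Definition holds (phi : formula L) (k : nat) (c : 'I_k -> M) : Prop :=
  forall e : nat -> M, (forall j : 'I_k, e j = c j) -> sat e phi.

Definition tcat (n k : nat) (a : 'I_n -> M) (b : 'I_k -> M) : 'I_(n + k) -> M :=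
  fun i => match split i with inl j => a j | inr j => b j end.

Definition definable (B : set M) (n : nat) (X : set ('I_n -> M)) : Prop :=
  exists (phi : formula L) (k : nat) (b : 'I_k -> M),
    (forall j, B (b j)) /\ X = [set a | holds phi (tcat a b)].

Arguments definable : clear implicits.

(* identification of L_x(B) with a subalgebra of L_{xy}(B) *)
Definition liftx (n m : nat) (X : set ('I_n -> M)) : set ('I_(n + m) -> M) :=
  [set c | X (fun i => c (lshift m i))].
Definition lifty (n m : nat) (Y : set ('I_m -> M)) : set ('I_(n + m) -> M) :=
  [set c | Y (fun j => c (rshift n j))].

Arguments liftx {n} m X.
Arguments lifty n {m} Y.

(* "small" = of cardinality strictly less than |K| (K is the saturation) *)
Definition small (K : Type) (A : set M) : Prop :=
  card_le A [set: K] /\ ~ card_le [set: K] A.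

Definition saturated (K : Type) : Prop :=
  forall (B : set M) (n : nat) (Sigma : set (set ('I_n -> M))),
    small K B -> (forall X, Sigma X -> definable B n X) ->
    (forall (k : nat) (F : 'I_k -> set ('I_n -> M)),
        (forall i, Sigma (F i)) -> exists a, forall i, F i a) ->
    exists a, forall X, Sigma X -> X a.

Definition automorphism (s : M -> M) : Prop :=
  bijective s /\
  (forall f a, s (@ifun L M f a) = @ifun L M f (fun j => s (a j))) /\
  (forall r a, @irel L M r a <-> @irel L M r (fun j => s (a j))).

Definition elementary_on (C : set M) (f : M -> M) : Prop :=
  forall (phi : formula L) (k : nat) (c : 'I_k -> M), (forall j, C (c j)) ->
    (holds phi c <-> holds phi (fun j => f (c j))).

Definition strongly_homogeneous (K : Type) : Prop :=
  forall (C : set M) (f : M -> M), small K C -> elementary_on C f ->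
    exists s, automorphism s /\ forall x, C x -> s x = f x.

(* M is a monster model of the complete theory T = Th(M), saturated and
   strongly homogeneous in the cardinal |K| > |T|. *)
Definition monster (K : Type) : Prop :=
  infinite_set [set: K] /\
  card_le [set: (Fun L + Rel L)%type] [set: K] /\
  ~ card_le [set: K] [set: (Fun L + Rel L)%type] /\
  saturated K /\ strongly_homogeneous K.

(* complete type over B in n variables, as an ultrafilter of the Boolean
   algebra of B-definable subsets of M^n *)
Definition is_type (B : set M) (n : nat) (p : set (set ('I_n -> M))) : Prop :=
  (forall X, p X -> definable B n X) /\
  p setT /\ ~ p set0 /\
  (forall X Y, p X -> p Y -> p (X `&` Y)) /\
  (forall X Y, p X -> definable B n Y -> X `<=` Y -> p Y) /\
  (forall X, definable B n X -> p X \/ p (~` X)).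

Arguments is_type : clear implicits.

(* p >=_{D,A} q : there is r in S_xy(A) with p|_A ⊆ r and p ∪ r |- q
   (|- : finitely many formulas of p ∪ r imply each formula of q in M) *)
Definition dominates (A : set M) (n m : nat)
    (p : set (set ('I_n -> M))) (q : set (set ('I_m -> M))) : Prop :=
  exists r : set (set ('I_(n + m) -> M)),
    is_type A (n + m) r /\
    (forall X, p X -> definable A n X -> r (liftx m X)) /\
    (forall Y, q Y ->
       exists (k1 k2 : nat) (P : 'I_k1 -> set ('I_n -> M))
              (Q : 'I_k2 -> set ('I_(n + m) -> M)),
         (forall i, p (P i)) /\ (forall j, r (Q j)) /\
         (forall c, (forall i, liftx m (P i) c) -> (forall j, Q j c) ->
                    lifty n Y c)).

Section Measures.
Variable R : realType.

(* finitely additive probability measure on L_n(B) (identified with the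
   B-definable subsets of M^n); values on other sets are irrelevant *)
Definition keisler (B : set M) (n : nat) (mu : set ('I_n -> M) -> R) : Prop :=
  mu setT = 1 /\
  (forall X, definable B n X -> 0 <= mu X) /\
  (forall X Y, definable B n X -> definable B n Y -> X `&` Y = set0 ->
     mu (X `|` Y) = mu X + mu Y).

Arguments keisler : clear implicits.

Definition dirac (n : nat) (p : set (set ('I_n -> M))) : set ('I_n -> M) -> R :=
  fun X => if `[< p X >] then 1 else 0.

Definition ext_space (A : set M) (n m : nat)
    (lam : set ('I_(n + m) -> M) -> R) (mu : set ('I_n -> M) -> R)
  : set (set ('I_(n + m) -> M) -> R) :=
  [set om | keisler setT (n + m) om /\
            (forall Z, definable A (n + m) Z -> om Z = lam Z) /\
            (forall X, definable setT n X -> om (liftx m X) = mu X)].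

Definition ext_dominates (A : set M) (n m : nat)
    (mu : set ('I_n -> M) -> R) (nu : set ('I_m -> M) -> R) : Prop :=
  exists lam : set ('I_(n + m) -> M) -> R,
    keisler A (n + m) lam /\
    (forall X, definable A n X -> lam (liftx m X) = mu X) /\
    (forall om, ext_space A lam mu om ->
       forall Y, definable setT m Y -> om (lifty n Y) = nu Y).

End Measures.
End Semantics.

(* Main.v *)
Require Import Defs.
From mathcomp Require Import all_boot all_order all_algebra.
From mathcomp Require Import boolp classical_sets cardinality reals.
From mathcomp Require Import zify lra.
Set Implicit Arguments. Unset Strict Implicit. Unset Printing Implicit Defensive.
Local Open Scope classical_set_scope.

Section Syn.
Variable L : signature.

Fixpoint tmx (t : term L) : nat :=
  match t with tvar i => i.+1 | tapp f ts => \max_(j < fun_ar f) tmx (ts j) end.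

Fixpoint mx (phi : formula L) : nat :=
  match phi with
  | fEq t u => maxn (tmx t) (tmx u)
  | fRel r ts => \max_(j < rel_ar r) tmx (ts j)
  | fNot psi => mx psi
  | fAnd a b => maxn (mx a) (mx b)
  | fEx i psi => mx psi end.

Fixpoint trn (s : nat -> nat) (t : term L) : term L :=
  match t with tvar i => tvar L (s i) | tapp f ts => tapp (fun j => trn s (ts j)) end.

Fixpoint rn (s : nat -> nat) (phi : formula L) : formula L :=
  match phi with
  | fEq t u => fEq (trn s t) (trn s u)
  | fRel r ts => fRel (fun j => trn s (ts j))
  | fNot psi => fNot (rn s psi)
  | fAnd a b => fAnd (rn s a) (rn s b)
  | fEx i psi => let N := (\max_(j < mx psi) s j).+1 in
                 fEx N (rn (fun j => if j == i then N else s j) psi) end.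

Fixpoint fall (l : seq nat) (phi : formula L) : formula L :=
  match l with [::] => phi | i :: l' => fNot (fEx i (fNot (fall l' phi))) end.

Variable M : structure L.

Lemma teval_coin t (e e' : nat -> M) :
  (forall i, i < tmx t -> e i = e' i) -> teval e t = teval e' t.
Proof.
elim: t => [i|f ts IH] /= H; first by apply: H.
congr (ifun _); apply: funext => j; apply: IH => i Hi; apply: H.
apply: leq_trans Hi _; exact: (leq_bigmax (F := fun j => tmx (ts j)) j).
Qed.

Lemma sat_coin phi (e e' : nat -> M) :
  (forall i, i < mx phi -> e i = e' i) -> (sat e phi <-> sat e' phi).
Proof.
elim: phi e e' => [t u|r ts|psi IH|a IHa b IHb|i psi IH] e e' /= H.
- rewrite (teval_coin (e':=e')) ?(teval_coin (t:=u) (e':=e')) //.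
  + by move=> k Hk; apply: H; apply: leq_trans Hk (leq_maxr _ _).
  + by move=> k Hk; apply: H; apply: leq_trans Hk (leq_maxl _ _).
- suff -> : (fun j => teval e (ts j)) = (fun j => teval e' (ts j)) by [].
  apply: funext => j; apply: teval_coin => k Hk; apply: H.
  apply: leq_trans Hk _; exact: (leq_bigmax (F := fun j => tmx (ts j)) j).
- by rewrite (IH e e').
- rewrite (IHa e e') ?(IHb e e') //.
  + by move=> k Hk; apply: H; apply: leq_trans Hk (leq_maxr _ _).
  + by move=> k Hk; apply: H; apply: leq_trans Hk (leq_maxl _ _).
- have key : forall a, sat (fun k => if k == i then a else e k) psi <->
                        sat (fun k => if k == i then a else e' k) psi.
    by move=> a; apply: IH => k Hk; case: eqP => // _; apply: H.
  by split=> -[a Ha]; exists a; move: Ha; rewrite key.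
Qed.

Lemma teval_rn s t (e : nat -> M) : teval e (trn s t) = teval (e \o s) t.
Proof.
elim: t => [i|f ts IH] //=; congr (ifun _); apply: funext => j; exact: IH.
Qed.

Lemma sat_rn phi s (e : nat -> M) : sat e (rn s phi) <-> sat (e \o s) phi.
Proof.
elim: phi s e => [t u|r ts|psi IH|a IHa b IHb|i psi IH] s e /=.
- by rewrite !teval_rn.
- suff -> : (fun j => teval e (trn s (ts j))) = (fun j => teval (e \o s) (ts j)) by [].
  by apply: funext => j; rewrite teval_rn.
- by rewrite IH.
- by rewrite IHa IHb.
- set N := (\max_(j < mx psi) s j).+1.
  have key : forall a, sat (fun k => if k == N then a else e k)
                      (rn (fun j => if j == i then N else s j) psi) <->
                      sat (fun k => if k == i then a else (e \o s) k) psi.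
    move=> a; rewrite IH; apply: sat_coin => k Hk /=.
    case: (k == i); first by rewrite eqxx.
    have : s k < N by rewrite ltnS; exact: (leq_bigmax (F := fun j : 'I_(mx psi) => s j) (Ordinal Hk)).
    by rewrite ltn_neqAle => /andP [/negbTE -> _].
  by split=> -[a Ha]; exists a; move: Ha; rewrite key.
Qed.

Lemma sat_fall l phi (e : nat -> M) :
  sat e (fall l phi) <-> forall e', (forall j, j \notin l -> e' j = e j) -> sat e' phi.
Proof.
elim: l e => [|i l IH] e /=.
- split; last by apply; move=> j.
  move=> H e' He'; suff -> : e' = e by []. by apply: funext => j; apply: He'.
- split.
  + move=> H e' He'; have [//|He] := pselect (sat e' phi); exfalso; apply: H; exists (e' i); rewrite IH => H2.
    apply: He; apply: H2 => j Hj; case: eqP => [->//|ji].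
    by apply: He'; rewrite in_cons negb_or Hj andbT; apply/eqP.
  + move=> H [a]; apply; apply/IH => e' He'; apply: H => j.
    rewrite in_cons negb_or => /andP [/negbTE ji jl].
    by rewrite He' // ji.
Qed.

End Syn.


Section Sem.
Variables (L : signature) (M : structure L).

Definition gap (s g j : nat) := if j < s then j else j + g.

Lemma holds_gap (phi : formula L) s g K K' (c : 'I_K -> M) (c' : 'I_K' -> M) :
  s <= K -> K' = K + g ->
  (forall (i : 'I_K) (i' : 'I_K'), (i' : nat) = gap s g i -> c' i' = c i) ->
  (holds (rn (gap s g) phi) c' <-> holds phi c).
Proof.
move=> sK EK Hc; split.
- move=> H e' He'.
  pose e := fun i : nat => if (s <= i < s + g) then
     (if insub i is Some j then c' j else e' i)
     else e' (if i < s then i else i - g).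
  have Hee : e \o gap s g = e'.
    apply: funext => j; rewrite /e /gap /=.
    case: (ltnP j s) => js.
    + have -> : (s <= j < s + g) = false by apply/negbTE; lia.
      by rewrite js.
    + have -> : (s <= j + g < s + g) = false by apply/negbTE; lia.
      have -> : (j + g < s) = false by apply/negbTE; lia.
      by rewrite addnK.
  have := H e; rewrite sat_rn Hee; apply=> j.
  rewrite /e; case: ifP => Hj.
  + case: insubP => [j' _ Ej|]; last by rewrite ltn_ord.
    by congr c'; apply: val_inj.
  + have uK : (if j < s then (j : nat) else (j : nat) - g) < K.
      by case: ifP => js; move: (ltn_ord j) Hj; lia.
    rewrite (He' (Ordinal uK)) /=; symmetry; apply: Hc => /=.
    rewrite /gap; case: (ltnP j s) => js.
    * by rewrite js.
    * have -> : (j - g < s) = false by apply/negbTE; move: Hj; lia.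
      move: Hj; lia.
- move=> H e He; rewrite sat_rn; apply: H => j /=.
  have lt : gap s g j < K' by rewrite /gap; case: ifP; move: (ltn_ord j); lia.
  by rewrite (He (Ordinal lt)); apply: Hc.
Qed.

End Sem.


Ltac addord := repeat match goal with x : ordinal ?n |- _ =>
  lazymatch goal with _ : is_true (nat_of_ord x < n) |- _ => fail
  | _ => have := ltn_ord x; intro end end.

Ltac solve_idx :=
  let i := fresh "i" in let i' := fresh "i'" in let E := fresh "E" in
  move=> i i' E; rewrite /tcat;
  repeat (case: splitP => ? ?);
  move: E; rewrite /gap ?ltn0 /=; (case: ifP => ? E || move=> E); simpl;
  (by congr (_ _); apply: val_inj; simpl; addord; lia) ||
  (exfalso; addord; lia).

Section Def.
Variables (L : signature) (M : structure L).

Lemma def_mono (B B' : set M) n (X : set ('I_n -> M)) :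
  B `<=` B' -> definable B X -> definable B' X.
Proof.
move=> BB [phi [k [b [Hb EX]]]]; exists phi, k, b; split=> // j; exact: BB.
Qed.

Lemma def_liftx (B : set M) n m (X : set ('I_n -> M)) :
  definable B X -> definable B (liftx (n:=n) (m:=m) X).
Proof.
case=> phi [k [b [Hb ->]]]; exists (rn (gap n m) phi), k, b; split=> //.
apply: funext => c /=; apply: propext; rewrite /liftx /=; symmetry.
apply: (@holds_gap L M _ _ _ (n + k)); [lia | lia | solve_idx].
Qed.

Lemma def_lifty (B : set M) n m (Y : set ('I_m -> M)) :
  definable B Y -> definable B (lifty (n:=n) (m:=m) Y).
Proof.
case=> phi [k [b [Hb ->]]]; exists (rn (gap 0 n) phi), k, b; split=> //.
apply: funext => c /=; apply: propext; rewrite /lifty /=; symmetry.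
apply: (@holds_gap L M _ _ _ (m + k)); [lia | lia | solve_idx].
Qed.

Lemma holds_and (phi psi : formula L) k (c : 'I_k -> M) :
  holds (fAnd phi psi) c <-> holds phi c /\ holds psi c.
Proof.
split; first by move=> H; split=> e He; have [] := H e He.
by case=> H1 H2 e He; split; [apply: H1 | apply: H2].
Qed.

Lemma def_and (B : set M) n (X Y : set ('I_n -> M)) :
  definable B X -> definable B Y -> definable B (X `&` Y).
Proof.
case=> phi [k [b [Hb ->]]]; case=> psi [k' [b' [Hb' ->]]].
exists (fAnd (rn (gap (n + k) k') phi) (rn (gap n k) psi)), (k + k'), (tcat b b').
split; first by move=> j; rewrite /tcat; case: split.
apply: funext => c /=; apply: propext; rewrite holds_and.
have -> : holds (rn (gap (n + k) k') phi) (tcat c (tcat b b')) <-> holds phi (tcat c b).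
  apply: (@holds_gap L M _ _ _ (n + k)); [lia | lia | solve_idx].
have -> : holds (rn (gap n k) psi) (tcat c (tcat b b')) <-> holds psi (tcat c b').
  apply: (@holds_gap L M _ _ _ (n + k')); [lia | lia | solve_idx].
by [].
Qed.

End Def.


Lemma setIvv T (Z : set T) : Z `&` ~` Z = set0.
Proof. by apply: funext => x; apply: propext; split=> // -[]. Qed.

Section Def2.
Variables (L : signature) (M : structure L).

Lemma fall_close (phi : formula L) K (c : 'I_K -> M) (e : nat -> M) :
  (forall j : 'I_K, e j = c j) ->
  (sat e (fall (iota K (mx phi - K)) phi) <-> holds phi c).
Proof.
move=> He; rewrite sat_fall; split.
- move=> H e'' He''.
  pose e' := fun j => if j \in iota K (mx phi - K) then e'' j else e j.
  have H' : sat e' phi by apply: H => j /negbTE Hj; rewrite /e' Hj.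
  have Hc : forall j, j < mx phi -> e' j = e'' j.
    move=> j Hj; rewrite /e'; case: ifP => // /negbT; rewrite mem_iota => Hn.
    have jK : j < K by move: Hn; lia.
    by rewrite (He (Ordinal jK)) (He'' (Ordinal jK)).
  exact: (proj1 (sat_coin Hc) H').
- move=> H e' He'; apply: H => j; rewrite He' ?He //.
  by rewrite mem_iota; move: (ltn_ord j); lia.
Qed.

Lemma def_compl (x0 : M) (B : set M) n (X : set ('I_n -> M)) :
  definable B X -> definable B (~` X).
Proof.
case=> phi [k [b [Hb ->]]].
exists (fNot (fall (iota (n + k) (mx phi - (n + k))) phi)), k, b; split=> //.
apply: funext => a; apply: propext; split.
- move=> H e He Hs; apply: H; exact (proj1 (fall_close phi He) Hs).
- move=> H Hh.
  pose e := fun j => if @insub _ (fun j => j < n + k) 'I_(n + k) j is Some o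
                     then tcat a b o else x0.
  have He : forall j : 'I_(n + k), e j = tcat a b j.
    move=> j; rewrite /e; case: insubP => [o _ Eo|]; last by rewrite ltn_ord.
    by congr (tcat a b); apply: val_inj.
  apply: (H e He); exact (proj2 (fall_close phi He) Hh).
Qed.

Lemma def_U (x0 : M) (B : set M) n (X Y : set ('I_n -> M)) :
  definable B X -> definable B Y -> definable B (X `|` Y).
Proof.
move=> DX DY; have -> : X `|` Y = ~` (~` X `&` ~` Y) by rewrite setCI !setCK.
by apply: (def_compl x0); apply: def_and; apply: (def_compl x0).
Qed.

Lemma def_empty (nM : ~ inhabited M) (B : set M) n (X : set ('I_n -> M)) :
  definable B X -> X = setT.
Proof.
case=> phi [k [b [_ ->]]]; apply: funext => a; apply: propext; split=> // _ e.
by exfalso; apply: nM; exact: (inhabits (e 0)).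
Qed.

Lemma type_bigI (B : set M) N (p : set (set ('I_N -> M))) :
  is_type B p -> forall k (F : 'I_k -> set ('I_N -> M)),
  (forall i, p (F i)) -> p [set a | forall i, F i a].
Proof.
move=> [_ [pT [_ [pI _]]]] k F HF.
have H : forall j, j <= k -> p [set a | forall i : 'I_k, i < j -> F i a].
  elim=> [|j IH] jk.
  - suff -> : [set a | forall i : 'I_k, i < 0 -> F i a] = setT by [].
    by apply: funext => a; apply: propext; split=> // _ i; rewrite ltn0.
  - have jk' : j < k := jk.
    have -> : [set a | forall i : 'I_k, i < j.+1 -> F i a] =
              [set a | forall i : 'I_k, i < j -> F i a] `&` F (Ordinal jk').
      apply: funext => a; apply: propext; split.
      + move=> Ha; split; [move=> i ij; apply: Ha; lia | apply: Ha => /=; lia].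
      + case=> H1 H2 i; rewrite ltnS leq_eqVlt => /orP [/eqP ij|ij].
        * by have -> : i = Ordinal jk' by apply: val_inj.
        * exact: H1.
    by apply: pI; [apply: IH; lia | exact: HF].
have -> : [set a | forall i, F i a] = [set a | forall i : 'I_k, i < k -> F i a].
  apply: funext => a; apply: propext; split=> Ha i; first by move=> _; exact: Ha.
  exact: Ha (ltn_ord i).
exact: H.
Qed.

End Def2.

Section Meas.
Variables (L : signature) (M : structure L) (R : realType) (N : nat).
Variables (om : set ('I_N -> M) -> R) (x0 : M).
Hypothesis Hom : keisler setT om.
Local Open Scope ring_scope.

Lemma om_ge0 Z : definable setT Z -> 0 <= om Z.
Proof. by case: Hom => _ [H _]; apply: H. Qed.

Lemma om_add Z W : definable setT Z -> definable setT W -> Z `&` W = set0 ->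
  om (Z `|` W) = om Z + om W.
Proof. by case: Hom => _ [_ H]; apply: H. Qed.

Lemma om_compl Z : definable setT Z -> om (~` Z) = 1 - om Z.
Proof.
move=> DZ; have := om_add DZ (def_compl x0 DZ) (setIvv Z).
case: Hom => H1 _; rewrite setUv H1 => ->; lra.
Qed.

Lemma om_mono Z W : definable setT Z -> definable setT W -> Z `<=` W -> om Z <= om W.
Proof.
move=> DZ DW ZW.
have DWZ : definable setT (W `&` ~` Z) := def_and DW (def_compl x0 DZ).
have E : W = Z `|` (W `&` ~` Z).
  apply: funext => x; apply: propext; split.
  - by move=> Wx; case: (pselect (Z x)) => Zx; [left|right].
  - by case=> [Zx|[]] //; exact: ZW.
have dis : Z `&` (W `&` ~` Z) = set0.
  by apply: funext => x; apply: propext; split=> // -[Zx [_ nZx]]; exact: nZx Zx.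
rewrite E (om_add DZ DWZ dis); have := om_ge0 DWZ; lra.
Qed.

Lemma om_le1 Z : definable setT Z -> om Z <= 1.
Proof. move=> DZ; have := om_compl DZ; have := om_ge0 (def_compl x0 DZ); lra. Qed.

Lemma om_I1 Z W : definable setT Z -> definable setT W -> om Z = 1 -> om W = 1 ->
  om (Z `&` W) = 1.
Proof.
move=> DZ DW oZ oW.
have DCW := def_compl x0 DW.
have h1 : om (Z `&` ~` W) <= om (~` W).
  by apply: (om_mono (def_and DZ DCW) DCW) => x [].
have h0 := om_ge0 (def_and DZ DCW).
have hc := om_compl DW.
have E : Z = (Z `&` W) `|` (Z `&` ~` W).
  apply: funext => x; apply: propext; split; last by case=> -[].
  by move=> Zx; case: (pselect (W x)) => Wx; [left|right].
have dis : (Z `&` W) `&` (Z `&` ~` W) = set0.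
  by apply: funext => x; apply: propext; split=> // -[[_ Wx] [_ nWx]]; exact: nWx Wx.
have := om_add (def_and DZ DW) (def_and DZ DCW) dis; rewrite -E; lra.
Qed.

End Meas.


Theorem proposition3p6 (L : signature) (M : structure L) (K : Type)
  (R : realType) (A : set M) (n m : nat)
  (p : set (set ('I_n -> M))) (q : set (set ('I_m -> M))) :
  monster M K -> small K A ->
  is_type setT p -> is_type setT q ->
  dominates A p q ->
  ext_dominates A (dirac R p) (dirac R q).
Proof.
move=> _ _ Hp Hq [r [Hr [Hpr Hqr]]].
exists (dirac R r).
have dir1 : forall N (P : set (set ('I_N -> M))) X, P X -> dirac R P X = 1%R.
  by move=> N P X PX; rewrite /dirac asboolT.
have dir0 : forall N (P : set (set ('I_N -> M))) X, ~ P X -> dirac R P X = 0%R.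
  by move=> N P X PX; rewrite /dirac asboolF.
have dirge0 : forall N (P : set (set ('I_N -> M))) X, (0 <= dirac R P X)%R.
  by move=> N P X; rewrite /dirac; case: asboolP.
case: (Hr) => rD [rT [r0 [rI [rU rC]]]].
case: (Hp) => pD [pT [p0 [pI [pU pC]]]].
case: (Hq) => qD [qT [q0 [qI [qU qC]]]].
have AT : A `<=` setT by [].
case: (pselect (inhabited M)) => [[x0]|nM]; last first.
- have hT := def_empty nM.
  split; [|split].
  + split; [exact: dir1|split; first by move=> *; exact: dirge0].
    move=> X Y DX DY XY; exfalso.
    rewrite (hT _ _ _ DX) (hT _ _ _ DY) setIid in XY.
    by apply: r0; rewrite -XY.
  + move=> X DX; rewrite (hT _ _ _ DX).
    have -> : liftx (m:=m) (@setT ('I_n -> M)) = setT by [].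
    by rewrite !dir1.
  + move=> om [[Hk _] _] Y DY; rewrite (hT _ _ _ DY).
    have -> : lifty (n:=n) (@setT ('I_m -> M)) = setT by [].
    by rewrite Hk dir1.
split; [|split].
- split; first exact: dir1.
  split; first by move=> *; exact: dirge0.
  move=> X Y DX DY XY.
  have DU := def_U x0 DX DY.
  have nboth : r X -> r Y -> False by move=> rX rY; apply: r0; rewrite -XY; exact: rI.
  case: (pselect (r X)) => rX.
  + have rXY : r (X `|` Y) by apply: (rU X) => // x Xx; left.
    by rewrite (dir1 _ _ (X `|` Y)) // (dir1 _ _ X) // (dir0 _ _ Y) ?GRing.addr0 // => rY; exact: nboth.
  + case: (pselect (r Y)) => rY.
    * have rXY : r (X `|` Y) by apply: (rU Y) => // x Yx; right.
      by rewrite (dir1 _ _ (X `|` Y)) // (dir1 _ _ Y) // (dir0 _ _ X) ?GRing.add0r.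
    * rewrite !dir0 ?GRing.addr0 // => rXY.
      have rCX : r (~` X) by case: (rC X DX).
      have rCY : r (~` Y) by case: (rC Y DY).
      apply: r0.
      have <- : (X `|` Y) `&` (~` X `&` ~` Y) = set0.
        by apply: funext => x; apply: propext; split=> // -[[Xx|Yx] [nX nY]]; [exact: nX|exact: nY].
      by apply: (rI) => //; exact: (rI).
- move=> X DX.
  have DXT : definable setT X := def_mono AT DX.
  case: (pselect (p X)) => pX.
  + by rewrite !dir1 //; exact: Hpr.
  + have pCX : p (~` X) by case: (pC X DXT).
    have DCX : definable A (~` X) := def_compl x0 DX.
    have rl : r (liftx (m:=m) (~` X)) := Hpr _ pCX DCX.
    rewrite !dir0 // => rX; apply: r0.
    have <- : liftx (m:=m) X `&` liftx (m:=m) (~` X) = set0.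
      by apply: funext => c; apply: propext; split=> // -[H1 H2]; exact: H2 H1.
    exact: rI.
- move=> om [Hk [HA Hx]] Y DY.
  have key : forall Y0, q Y0 -> om (lifty (n:=n) Y0) = 1%R.
    move=> Y0 qY; have [k1 [k2 [P [Q [HP [HQ Himp]]]]]] := Hqr Y0 qY.
    pose PP := [set a | forall i, P i a].
    pose QQ := [set c | forall j, Q j c].
    have pPP : p PP := type_bigI Hp HP.
    have rQQ : r QQ := type_bigI Hr HQ.
    have DPP : definable setT PP := pD _ pPP.
    have DQQ : definable A QQ := rD _ rQQ.
    have DQQT : definable setT QQ := def_mono AT DQQ.
    have DL : definable setT (liftx (m:=m) PP) by apply: def_liftx.
    have DY0 : definable setT (lifty (n:=n) Y0) by apply: def_lifty; exact: qD.
    have o1 : om (liftx (m:=m) PP) = 1%R by rewrite Hx // dir1.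
    have o2 : om QQ = 1%R by rewrite HA // dir1.
    have o3 := om_I1 x0 Hk DL DQQT o1 o2.
    have le1 : (om (liftx (m:=m) PP `&` QQ) <= om (lifty (n:=n) Y0))%R.
      apply: (om_mono x0 Hk (def_and DL DQQT) DY0) => c [Pc Qc].
      by apply: Himp => [i|j]; [exact: Pc | exact: Qc].
    have le2 := om_le1 x0 Hk DY0.
    lra.
  case: (pselect (q Y)) => qY.
  + by rewrite key // dir1.
  + have qCY : q (~` Y) by case: (qC Y DY).
    have := key _ qCY.
    have -> : lifty (n:=n) (~` Y) = ~` lifty (n:=n) Y by [].
    rewrite (om_compl x0 Hk (Z := lifty (n:=n) Y)); last by apply: def_lifty.
    rewrite dir0 //; lra.
Qed.
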